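(* With $P(X)=\prod_{i=1}^n(X-x_i)=\sum_{i=0}^n a_iX^i$ ($a_n=1$), set $a_i=0$ for $i>n$ and $\alpha_{i,j}=(i+1)a_{i+1}a_j$. Then, as polynomial identities in $X,Y$, $$\Gamma_{\mathbb E}\big(P(X),P(Y)\big)=\sum_{i,j}\Gamma_{\mathbb E}(a_i,a_j)X^iY^j=\frac{P'(X)P(Y)-P'(Y)P(X)}{Y-X}=\sum_{i\ne j}\alpha_{i,j}\,\frac{X^iY^j-X^jY^i}{Y-X}.$$ Moreover, the functions $G^{kp}=\Gamma_{\mathbb E}(a_k,a_p)$ ($0\le k,p\le n-1$) are polynomials in $(a_0,\dots,a_{n-1})$, and regarding them as such, for every $p\in\{0,\dots,n-1\}$, $$\sum_{k=0}^{n-1}\partial_{a_k}\Gamma_{\mathbb E}(a_k,a_p)=-\tfrac12(p+1)(p+2)\,a_{p+2}.$$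
   Context: $\Gamma_{\mathbb E}(f,g)=\sum_i\partial_{x_i}f\,\partial_{x_i}g$ is the Euclidean carré du champ on $\mathbb{R}^n$; the $a_i$ are functions of $x=(x_1,\dots,x_n)$. *)

(* Defs.v *)
From Stdlib Require Import Reals Lra Lia Classical ClassicalEpsilon.
Open Scope R_scope.

(* Points of R^n are represented as x : nat -> R; only the coordinates
   x 0, ..., x (n-1) (the paper's x_1, ..., x_n) are used. *)

Fixpoint rsum (n : nat) (F : nat -> R) : R :=
  match n with O => 0 | S m => rsum m F + F m end.
Fixpoint rprod (n : nat) (F : nat -> R) : R :=
  match n with O => 1 | S m => rprod m F * F m end.

Definition upd (x : nat -> R) (l : nat) (t : R) : nat -> R :=
  fun k => if Nat.eqb k l then t else x k.

Definition has_partial (f : (nat -> R) -> R) (l : nat) (x : nat -> R) (v : R)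
  : Prop := derivable_pt_lim (fun t => f (upd x l t)) (x l) v.

(* the partial derivative d f / d x_l at x (0 if it does not exist) *)
Definition partial (f : (nat -> R) -> R) (l : nat) (x : nat -> R) : R :=
  match excluded_middle_informative (exists v, has_partial f l x v) with
  | left H => proj1_sig (constructive_indefinite_description _ H)
  | right _ => 0
  end.

(* ordinary derivative of a one-variable real function (0 if none) *)
Definition deriv1 (f : R -> R) (X : R) : R :=
  match excluded_middle_informative (exists v, derivable_pt_lim f X v) with
  | left H => proj1_sig (constructive_indefinite_description _ H)
  | right _ => 0
  end.

Definition GammaE (n : nat) (f g : (nat -> R) -> R) (x : nat -> R) : R :=
  rsum n (fun l => partial f l x * partial g l x).

Definition Ppoly (n : nat) (x : nat -> R) (X : R) : R :=
  rprod n (fun i => X - x i).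

(* coef n x k = a_k = coefficient of X^k in prod_{i<n} (X - x_i),
   computed by multiplying successively by (X - x_m);
   in particular a_n = 1 and a_k = 0 for k > n. *)
Fixpoint coef (n : nat) (x : nat -> R) (k : nat) : R :=
  match n with
  | O => match k with O => 1 | S _ => 0 end
  | S m => match k with O => 0 | S k' => coef m x k' end - x m * coef m x k
  end.

Definition alpha (n : nat) (x : nat -> R) (i j : nat) : R :=
  INR (i + 1) * coef n x (i + 1) * coef n x j.

Inductive is_poly (n : nat) : ((nat -> R) -> R) -> Prop :=
| poly_const (c : R) : is_poly n (fun _ => c)
| poly_var (i : nat) : (i < n)%nat -> is_poly n (fun a => a i)
| poly_add (f g : (nat -> R) -> R) :
    is_poly n f -> is_poly n g -> is_poly n (fun a => f a + g a)
| poly_mul (f g : (nat -> R) -> R) :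
    is_poly n f -> is_poly n g -> is_poly n (fun a => f a * g a).

Definition avec (n : nat) (x : nat -> R) : nat -> R :=
  fun i => if Nat.ltb i n then coef n x i else 0.

Definition aext (n : nat) (a : nat -> R) (i : nat) : R :=
  if Nat.ltb i n then a i else if Nat.eqb i n then 1 else 0.

(* Main.v *)
Require Import Defs.
From Stdlib Require Import Reals.
From Stdlib Require Import Lra Lia Classical ClassicalEpsilon FunctionalExtensionality.
Open Scope R_scope.

Lemma rsum_ext n F G : (forall i, (i < n)%nat -> F i = G i) -> rsum n F = rsum n G.
Proof. induction n; simpl; intros H; auto. rewrite IHn by (intros; apply H; lia). rewrite (H n) by lia; auto. Qed.
Lemma rprod_ext n F G : (forall i, (i < n)%nat -> F i = G i) -> rprod n F = rprod n G.
Proof. induction n; simpl; intros H; auto. rewrite IHn by (intros; apply H; lia). rewrite (H n) by lia; auto. Qed.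
Lemma rsum_plus n F G : rsum n (fun i => F i + G i) = rsum n F + rsum n G.
Proof. induction n; simpl; [lra|rewrite IHn; lra]. Qed.
Lemma rsum_minus n F G : rsum n (fun i => F i - G i) = rsum n F - rsum n G.
Proof. induction n; simpl; [lra|rewrite IHn; lra]. Qed.
Lemma rsum_scal n c F : rsum n (fun i => c * F i) = c * rsum n F.
Proof. induction n; simpl; [lra|rewrite IHn; lra]. Qed.
Lemma rsum_scal_r n c F : rsum n (fun i => F i * c) = rsum n F * c.
Proof. induction n; simpl; [lra|rewrite IHn; lra]. Qed.
Lemma rsum_zero n F : (forall i, (i < n)%nat -> F i = 0) -> rsum n F = 0.
Proof. intros H. rewrite (rsum_ext n F (fun _ => 0)) by auto. induction n; simpl; [lra|rewrite IHn; [lra|intros; apply H; lia]]. Qed.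
Lemma rsum_swap n m F : rsum n (fun i => rsum m (fun j => F i j)) = rsum m (fun j => rsum n (fun i => F i j)).
Proof. induction n; simpl. rewrite rsum_zero; auto. rewrite IHn, <- rsum_plus. auto. Qed.
Lemma rsum_mult n m F G : rsum n F * rsum m G = rsum n (fun i => rsum m (fun j => F i * G j)).
Proof. rewrite <- rsum_scal_r. apply rsum_ext; intros. rewrite <- rsum_scal. auto. Qed.
Lemma rsum_first n F : rsum (S n) F = F 0%nat + rsum n (fun i => F (S i)).
Proof. induction n; simpl in *. lra. rewrite IHn. lra. Qed.
Lemma rsum_delta N m F : rsum N (fun u => if Nat.eqb u m then F u else 0) = if Nat.ltb m N then F m else 0.
Proof. induction N; simpl. auto. rewrite IHN.
  destruct (Nat.eqb N m) eqn:E; [apply Nat.eqb_eq in E; subst|apply Nat.eqb_neq in E].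
  - replace (Nat.ltb m m) with false by (symmetry; apply Nat.ltb_ge; lia).
    replace (Nat.ltb m (S m)) with true by (symmetry; apply Nat.ltb_lt; lia). lra.
  - destruct (Nat.ltb m N) eqn:E1; [apply Nat.ltb_lt in E1|apply Nat.ltb_ge in E1].
    + replace (Nat.ltb m (S N)) with true by (symmetry; apply Nat.ltb_lt; lia). lra.
    + replace (Nat.ltb m (S N)) with false by (symmetry; apply Nat.ltb_ge; lia). lra.
Qed.
Lemma rsum_shift n c Y : Y * rsum n (fun i => c i * Y ^ i) =
  rsum (S n) (fun i => (match i with O => 0 | S i' => c i' end) * Y ^ i).
Proof. rewrite rsum_first. simpl. rewrite <- rsum_scal. rewrite Rmult_0_l, Rplus_0_l. apply rsum_ext; intros. simpl. ring. Qed.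

Lemma dl_mult f g x l1 l2 : derivable_pt_lim f x l1 -> derivable_pt_lim g x l2 ->
  derivable_pt_lim (fun y => f y * g y) x (l1 * g x + f x * l2).
Proof. intros; exact (derivable_pt_lim_mult f g x l1 l2 H H0). Qed.
Lemma dl_plus f g x l1 l2 : derivable_pt_lim f x l1 -> derivable_pt_lim g x l2 ->
  derivable_pt_lim (fun y => f y + g y) x (l1 + l2).
Proof. intros; exact (derivable_pt_lim_plus f g x l1 l2 H H0). Qed.
Lemma dl_minus f g x l1 l2 : derivable_pt_lim f x l1 -> derivable_pt_lim g x l2 ->
  derivable_pt_lim (fun y => f y - g y) x (l1 - l2).
Proof. intros; exact (derivable_pt_lim_minus f g x l1 l2 H H0). Qed.
Lemma dl_const c x : derivable_pt_lim (fun _ => c) x 0.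
Proof. exact (derivable_pt_lim_const c x). Qed.
Lemma dl_id x : derivable_pt_lim (fun y => y) x 1.
Proof. exact (derivable_pt_lim_id x). Qed.
Lemma dl_ext f g x l : (forall y, f y = g y) -> derivable_pt_lim f x l -> derivable_pt_lim g x l.
Proof. intros H; replace g with f; auto. apply functional_extensionality; auto. Qed.
Lemma dl_eqv f x l l' : l = l' -> derivable_pt_lim f x l -> derivable_pt_lim f x l'.
Proof. intros ->; auto. Qed.
Lemma dl_affine A B x : derivable_pt_lim (fun t => A + t * B) x B.
Proof. apply (dl_eqv _ _ (0 + (1 * B + x * 0))). ring. apply dl_plus. apply dl_const.
  apply (dl_mult (fun t => t) (fun _ => B)). apply dl_id. apply dl_const. Qed.

Lemma deriv1_eq f X v : derivable_pt_lim f X v -> deriv1 f X = v.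
Proof. intros H. unfold deriv1. destruct excluded_middle_informative as [e|e].
  - destruct constructive_indefinite_description as [w Hw]. simpl. eapply uniqueness_limite; eauto.
  - exfalso; apply e; eauto. Qed.
Lemma partial_eq f l x v : has_partial f l x v -> partial f l x = v.
Proof. intros H. unfold partial. destruct excluded_middle_informative as [e|e].
  - destruct constructive_indefinite_description as [w Hw]. simpl. eapply uniqueness_limite; eauto.
  - exfalso; apply e; eauto. Qed.
Lemma partial_affine f l x A B : (forall t, f (upd x l t) = A + t * B) -> partial f l x = B.
Proof. intros H. apply partial_eq. unfold has_partial. eapply dl_ext. intros; symmetry; apply H. apply dl_affine. Qed.

Lemma dl_poly m c X : derivable_pt_lim (fun y => rsum (S m) (fun i => c i * y ^ i)) X
   (rsum m (fun i => INR (i+1) * c (S i) * X ^ i)).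
Proof. induction m.
  - simpl. eapply dl_ext. intros; simpl; ring_simplify; reflexivity. apply dl_const.
  - eapply dl_ext. intros. symmetry. change (rsum (S (S m)) (fun i => c i * y ^ i)) with
      (rsum (S m) (fun i => c i * y ^ i) + c (S m) * y ^ (S m)). reflexivity.
    simpl rsum at 2. apply dl_plus. apply IHm.
    apply (dl_eqv _ _ (0 * X ^ S m + c (S m) * (INR (S m) * X ^ pred (S m)))).
    simpl pred. replace (m+1)%nat with (S m) by lia. ring.
    apply (dl_mult (fun _ => c (S m)) (fun y => y ^ S m)). apply dl_const. apply derivable_pt_lim_pow.
Qed.


Lemma coef_ext n x y k : (forall i, (i < n)%nat -> x i = y i) -> coef n x k = coef n y k.
Proof. revert k; induction n; intros k H; simpl; auto.
  destruct k; rewrite !IHn by (intros; apply H; lia); rewrite H by lia; auto. Qed.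
Lemma coef_high n x k : (n < k)%nat -> coef n x k = 0.
Proof. revert k; induction n; intros k H; simpl. destruct k; [lia|auto].
  destruct k; [lia|]. rewrite !IHn by lia. ring. Qed.
Lemma coef_n n x : coef n x n = 1.
Proof. induction n; simpl; auto. rewrite IHn, coef_high by lia. ring. Qed.

Lemma Ppoly_coef n x X : Ppoly n x X = rsum (S n) (fun i => coef n x i * X ^ i).
Proof. induction n.
  - simpl. unfold Ppoly; simpl. ring.
  - unfold Ppoly in *. simpl rprod. rewrite IHn.
    transitivity (X * rsum (S n) (fun i => coef n x i * X ^ i) - x n * rsum (S n) (fun i => coef n x i * X ^ i)). ring.
    rewrite rsum_shift, <- rsum_scal.
    change (rsum (S (S n)) (fun i => coef (S n) x i * X ^ i)) with
      (rsum (S n) (fun i => coef (S n) x i * X ^ i) + coef (S n) x (S n) * X ^ (S n)).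
    change (rsum (S (S n)) (fun i => match i with O => 0 | S i' => coef n x i' end * X ^ i)) with
      (rsum (S n) (fun i => match i with O => 0 | S i' => coef n x i' end * X ^ i) + coef n x n * X ^ (S n)).
    rewrite coef_n. replace (coef (S n) x (S n)) with 1 by (symmetry; apply coef_n).
    transitivity (rsum (S n) (fun i => match i with O => 0 | S i' => coef n x i' end * X ^ i - x n * (coef n x i * X ^ i)) + 1 * X ^ S n).
    rewrite rsum_minus. ring.
    f_equal. apply rsum_ext; intros i _. simpl. destruct i; ring.
Qed.

Lemma upd_same x l t : upd x l t l = t.
Proof. unfold upd. rewrite Nat.eqb_refl. auto. Qed.
Lemma upd_other x l t i : i <> l -> upd x l t i = x i.
Proof. intros H. unfold upd. apply Nat.eqb_neq in H. rewrite H. auto. Qed.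

Lemma coef_affine n x l i t : coef n (upd x l t) i =
  coef n (upd x l 0) i + t * (coef n (upd x l 1) i - coef n (upd x l 0) i).
Proof. revert i; induction n; intros i; simpl. ring.
  destruct (Nat.eq_dec n l) as [->|Hne].
  - rewrite !upd_same.
    assert (Hc : forall s j, coef l (upd x l s) j = coef l x j) by (intros; apply coef_ext; intros; apply upd_other; lia).
    destruct i; rewrite !Hc; ring.
  - rewrite !upd_other by auto. destruct i.
    + rewrite (IHn 0%nat). ring.
    + rewrite (IHn i), (IHn (S i)). ring.
Qed.


Definition dc n x l i := coef n (upd x l 1) i - coef n (upd x l 0) i.

Lemma partial_coef n x l i : partial (fun z => coef n z i) l x = dc n x l i.
Proof. apply (partial_affine _ _ _ (coef n (upd x l 0) i)). intros; apply coef_affine. Qed.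

Lemma partial_P n x l X : partial (fun z => Ppoly n z X) l x = rsum (S n) (fun i => dc n x l i * X ^ i).
Proof. apply (partial_affine _ _ _ (rsum (S n) (fun i => coef n (upd x l 0) i * X ^ i))).
  intros t. rewrite Ppoly_coef. rewrite <- rsum_scal, <- rsum_plus. apply rsum_ext; intros.
  rewrite coef_affine. unfold dc. ring. Qed.

Lemma Gamma_coef n x i j : GammaE n (fun z => coef n z i) (fun z => coef n z j) x =
  rsum n (fun l => dc n x l i * dc n x l j).
Proof. unfold GammaE. apply rsum_ext; intros. rewrite !partial_coef. auto. Qed.

Lemma ident1 n x X Y : GammaE n (fun z => Ppoly n z X) (fun z => Ppoly n z Y) x
     = rsum (S n) (fun i => rsum (S n) (fun j =>
         GammaE n (fun z => coef n z i) (fun z => coef n z j) x * X ^ i * Y ^ j)).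
Proof. unfold GammaE at 1.
  rewrite (rsum_ext n _ (fun l => rsum (S n) (fun i => rsum (S n) (fun j => (dc n x l i * X ^ i) * (dc n x l j * Y ^ j))))).
  2:{ intros. rewrite !partial_P. apply rsum_mult. }
  rewrite rsum_swap. apply rsum_ext; intros i _. rewrite rsum_swap. apply rsum_ext; intros j _.
  rewrite Gamma_coef. rewrite <- rsum_scal_r, <- rsum_scal_r. apply rsum_ext; intros. ring. Qed.

Definition Q n x l X := rprod n (fun i => if Nat.eqb i l then 1 else X - x i).

Lemma Q_factor n x l X : (l < n)%nat -> Ppoly n x X = Q n x l X * (X - x l).
Proof. induction n; intros H. lia. unfold Ppoly, Q in *. simpl.
  destruct (Nat.eq_dec l n) as [->|Hne].
  - rewrite Nat.eqb_refl. rewrite (rprod_ext n (fun i => if Nat.eqb i n then 1 else X - x i) (fun i => X - x i)). ring.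
    intros i Hi. replace (Nat.eqb i n) with false by (symmetry; apply Nat.eqb_neq; lia). auto.
  - rewrite IHn by lia. replace (Nat.eqb n l) with false by (symmetry; apply Nat.eqb_neq; lia). ring. Qed.

Lemma Q_upd n x l t X : Q n (upd x l t) l X = Q n x l X.
Proof. unfold Q. apply rprod_ext; intros i _. destruct (Nat.eqb i l) eqn:E; auto.
  apply Nat.eqb_neq in E. rewrite upd_other; auto. Qed.

Lemma partial_P_Q n x l X : (l < n)%nat -> partial (fun z => Ppoly n z X) l x = - Q n x l X.
Proof. intros H. apply (partial_affine _ _ _ (Q n x l X * X)). intros t.
  rewrite (Q_factor n _ l) by auto. rewrite Q_upd, upd_same. ring. Qed.

Lemma dl_P n x X : derivable_pt_lim (Ppoly n x) X (rsum n (fun l => Q n x l X)).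
Proof. induction n.
  - simpl. unfold Ppoly; simpl. apply dl_const.
  - unfold Ppoly. simpl rprod.
    apply (dl_eqv _ _ (rsum n (fun l => Q n x l X) * (X - x n) + Ppoly n x X * (1 - 0))).
    2:{ apply (dl_mult (Ppoly n x) (fun y => y - x n)); auto. apply dl_minus. apply dl_id. apply dl_const. }
    simpl. rewrite <- rsum_scal_r. replace (1-0) with 1 by ring. rewrite Rmult_1_r. f_equal.
    + apply rsum_ext; intros i Hi. unfold Q. simpl. replace (Nat.eqb n i) with false by (symmetry; apply Nat.eqb_neq; lia). auto.
    + unfold Q, Ppoly. simpl. rewrite Nat.eqb_refl. rewrite (rprod_ext n (fun i => if Nat.eqb i n then 1 else X - x i) (fun i => X - x i)). ring.
      intros i Hi. replace (Nat.eqb i n) with false by (symmetry; apply Nat.eqb_neq; lia). auto.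
Qed.

Lemma Gamma_Q n x X Y : GammaE n (fun z => Ppoly n z X) (fun z => Ppoly n z Y) x =
  rsum n (fun l => Q n x l X * Q n x l Y).
Proof. unfold GammaE. apply rsum_ext; intros. rewrite !partial_P_Q by auto. ring. Qed.

Lemma key2 n x X Y : (Y - X) * GammaE n (fun z => Ppoly n z X) (fun z => Ppoly n z Y) x =
  deriv1 (Ppoly n x) X * Ppoly n x Y - deriv1 (Ppoly n x) Y * Ppoly n x X.
Proof. rewrite Gamma_Q. rewrite !(deriv1_eq _ _ _ (dl_P n x _)).
  rewrite <- rsum_scal, <- !rsum_scal_r, <- rsum_minus. apply rsum_ext; intros l Hl.
  rewrite (Q_factor n x l X), (Q_factor n x l Y) by auto. ring. Qed.

Lemma dl_P' n x X : derivable_pt_lim (Ppoly n x) X (rsum (S n) (fun i => INR (i+1) * coef n x (i+1) * X ^ i)).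
Proof. eapply dl_ext. intros; symmetry; apply Ppoly_coef.
  eapply dl_eqv. 2: apply dl_poly. simpl. rewrite coef_high by lia. rewrite Rmult_0_r, Rmult_0_l, Rplus_0_r.
  apply rsum_ext; intros. replace (i+1)%nat with (S i) by lia. auto. Qed.

Lemma key3 n x X Y : rsum (S n) (fun i => rsum (S n) (fun j => alpha n x i j * (X ^ i * Y ^ j - X ^ j * Y ^ i))) =
  deriv1 (Ppoly n x) X * Ppoly n x Y - deriv1 (Ppoly n x) Y * Ppoly n x X.
Proof. rewrite !(deriv1_eq _ _ _ (dl_P' n x _)). rewrite !(Ppoly_coef n x). rewrite !rsum_mult.
  rewrite <- rsum_minus. apply rsum_ext; intros. rewrite <- rsum_minus. apply rsum_ext; intros.
  unfold alpha. ring. Qed.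

Lemma part1 n : forall (x : nat -> R) (X Y : R),
     GammaE n (fun z => Ppoly n z X) (fun z => Ppoly n z Y) x
     = rsum (S n) (fun i => rsum (S n) (fun j =>
         GammaE n (fun z => coef n z i) (fun z => coef n z j) x * X ^ i * Y ^ j))
   /\ (X <> Y ->
       GammaE n (fun z => Ppoly n z X) (fun z => Ppoly n z Y) x
       = (deriv1 (Ppoly n x) X * Ppoly n x Y - deriv1 (Ppoly n x) Y * Ppoly n x X)
         / (Y - X))
   /\ (X <> Y ->
       GammaE n (fun z => Ppoly n z X) (fun z => Ppoly n z Y) x
       = rsum (S n) (fun i => rsum (S n) (fun j =>
           if Nat.eqb i j then 0
           else alpha n x i j * (X ^ i * Y ^ j - X ^ j * Y ^ i) / (Y - X)))).
Proof. intros x X Y. split; [apply ident1|]. 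
  assert (H2 : X <> Y -> GammaE n (fun z => Ppoly n z X) (fun z => Ppoly n z Y) x
       = (deriv1 (Ppoly n x) X * Ppoly n x Y - deriv1 (Ppoly n x) Y * Ppoly n x X) / (Y - X)).
  { intros H. rewrite <- key2. field. intros C; apply H; lra. }
  split; auto. intros H. rewrite H2 by auto. rewrite <- key3.
  unfold Rdiv. rewrite <- rsum_scal_r. apply rsum_ext; intros i _. rewrite <- rsum_scal_r. apply rsum_ext; intros j _.
  destruct (Nat.eqb i j) eqn:E. apply Nat.eqb_eq in E; subst. ring. ring. Qed.


Lemma dl_loc_zero f lo hi X : lo < X < hi -> (forall y, lo < y < hi -> f y = 0) -> derivable_pt_lim f X 0.
Proof. intros HX H eps Heps.
  assert (Hd : 0 < Rmin (X - lo) (hi - X)) by (apply Rmin_pos; lra).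
  exists (mkposreal _ Hd). intros h Hh Hlt. simpl in Hlt.
  assert (h0 : Rabs h < X - lo) by (eapply Rlt_le_trans; [apply Hlt|apply Rmin_l]).
  assert (h1 : Rabs h < hi - X) by (eapply Rlt_le_trans; [apply Hlt|apply Rmin_r]).
  apply Rabs_def2 in h0. apply Rabs_def2 in h1.
  rewrite (H (X + h)) by lra. rewrite (H X) by lra. replace ((0 - 0) / h - 0) with 0 by (field; lra). rewrite Rabs_R0. auto. Qed.

Lemma poly_zero_interval M : forall c lo hi, lo < hi ->
  (forall y, lo < y < hi -> rsum M (fun i => c i * y ^ i) = 0) -> forall i, (i < M)%nat -> c i = 0.
Proof. induction M; intros c lo hi Hlh H i Hi. lia.
  assert (Hd : forall i, (i < M)%nat -> INR (i+1) * c (S i) = 0).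
  { apply (IHM _ lo hi Hlh). intros y Hy.
    apply (uniqueness_limite (fun y => rsum (S M) (fun i => c i * y ^ i)) y). apply dl_poly.
    apply (dl_loc_zero _ lo hi); auto. }
  assert (HS : forall i, (i < M)%nat -> c (S i) = 0).
  { intros j Hj. specialize (Hd j Hj). apply Rmult_integral in Hd. destruct Hd as [Hd|Hd]; auto.
    exfalso. apply (not_0_INR (j+1)); [lia|auto]. }
  destruct i. 
  - assert (Hm := H ((lo+hi)/2) ltac:(lra)). rewrite rsum_first in Hm.
    rewrite (rsum_zero M) in Hm. simpl in Hm. lra. intros j Hj. rewrite HS by auto. ring.
  - apply HS. lia. Qed.

Lemma poly_zero_all M c : (forall y, rsum M (fun i => c i * y ^ i) = 0) -> forall i, (i < M)%nat -> c i = 0.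
Proof. intros H. apply (poly_zero_interval M c 0 1); [lra|]. intros; auto. Qed.

Lemma bivar_zero M e : (forall X Y, rsum M (fun k => rsum M (fun p => e k p * X ^ k * Y ^ p)) = 0) ->
  forall k p, (k < M)%nat -> (p < M)%nat -> e k p = 0.
Proof. intros H k p Hk Hp.
  assert (H1 : forall Y, forall k, (k < M)%nat -> rsum M (fun p => e k p * Y ^ p) = 0).
  { intros Y. apply poly_zero_all. intros X. rewrite <- (H X Y). apply rsum_ext; intros.
    rewrite Rmult_comm, <- rsum_scal. apply rsum_ext; intros. ring. }
  apply (poly_zero_all M (e k)); auto. Qed.

Lemma rsum_trunc N M F : (N <= M)%nat -> (forall i, (N <= i < M)%nat -> F i = 0) -> rsum M F = rsum N F.
Proof. induction M; intros H1 H2. replace N with 0%nat by lia. auto.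
  destruct (Nat.eq_dec N (S M)) as [->|Hne]. auto. simpl. rewrite IHM; [|lia|intros; apply H2; lia]. rewrite H2 by lia. ring. Qed.


Definition Gm n x k p := GammaE n (fun z => coef n z k) (fun z => coef n z p) x.

Lemma dc_hi n x l p : (n <= p)%nat -> dc n x l p = 0.
Proof. intros H. unfold dc. destruct (Nat.eq_dec p n) as [->|Hne]. rewrite !coef_n. ring.
  rewrite !coef_high by lia. ring. Qed.
Lemma Gm_hi_r n x k p : (n <= p)%nat -> Gm n x k p = 0.
Proof. intros H. unfold Gm. rewrite Gamma_coef. apply rsum_zero. intros. rewrite (dc_hi n x _ p) by auto. ring. Qed.
Lemma Gm_hi_l n x k p : (n <= k)%nat -> Gm n x k p = 0.
Proof. intros H. unfold Gm. rewrite Gamma_coef. apply rsum_zero. intros. rewrite (dc_hi n x _ k) by auto. ring. Qed.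

Definition sY n x k p := match p with O => 0 | S p' => Gm n x k p' end.
Definition sX n x k p := match k with O => 0 | S k' => Gm n x k' p end.
Definition ee n x k p := sY n x k p - sX n x k p - (alpha n x k p - alpha n x p k).

Lemma gen_id n x X Y : (Y - X) * rsum (S n) (fun k => rsum (S n) (fun p => Gm n x k p * X ^ k * Y ^ p)) =
  rsum (S n) (fun i => rsum (S n) (fun j => alpha n x i j * (X ^ i * Y ^ j - X ^ j * Y ^ i))).
Proof. rewrite key3, <- key2, ident1. auto. Qed.

Lemma T1 n x X Y : Y * rsum (S n) (fun k => rsum (S n) (fun p => Gm n x k p * X ^ k * Y ^ p)) =
  rsum (S (S n)) (fun k => rsum (S (S n)) (fun p => sY n x k p * X ^ k * Y ^ p)).
Proof. rewrite <- rsum_scal. rewrite (rsum_trunc (S n) (S (S n))); [|lia|].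
  2:{ intros i Hi. replace i with (S n) by lia. apply rsum_zero. intros p _. destruct p; simpl. ring. rewrite Gm_hi_l by lia. ring. }
  apply rsum_ext; intros k _.
  transitivity (X ^ k * (Y * rsum (S n) (fun p => Gm n x k p * Y ^ p))).
  rewrite <- !rsum_scal. apply rsum_ext; intros; ring.
  rewrite rsum_shift, <- rsum_scal. apply rsum_ext; intros p _. unfold sY. destruct p; ring. Qed.

Lemma T2 n x X Y : X * rsum (S n) (fun k => rsum (S n) (fun p => Gm n x k p * X ^ k * Y ^ p)) =
  rsum (S (S n)) (fun k => rsum (S (S n)) (fun p => sX n x k p * X ^ k * Y ^ p)).
Proof. rewrite rsum_swap, (rsum_swap (S (S n))). rewrite <- rsum_scal. rewrite (rsum_trunc (S n) (S (S n))); [|lia|].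
  2:{ intros i Hi. replace i with (S n) by lia. apply rsum_zero. intros p _. destruct p; simpl. ring. rewrite Gm_hi_r by lia. ring. }
  apply rsum_ext; intros p _.
  transitivity (Y ^ p * (X * rsum (S n) (fun k => Gm n x k p * X ^ k))).
  rewrite <- !rsum_scal. apply rsum_ext; intros; ring.
  rewrite rsum_shift, <- rsum_scal. apply rsum_ext; intros k _. unfold sX. destruct k; ring. Qed.

Lemma alpha_hi n x i j : ((n <= i)%nat \/ (n < j)%nat) -> alpha n x i j = 0.
Proof. intros [H|H]; unfold alpha. rewrite (coef_high n x (i+1)) by lia. ring. rewrite (coef_high n x j) by lia. ring. Qed.

Lemma T3 n x X Y : rsum (S n) (fun i => rsum (S n) (fun j => alpha n x i j * (X ^ i * Y ^ j - X ^ j * Y ^ i))) =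
  rsum (S (S n)) (fun k => rsum (S (S n)) (fun p => (alpha n x k p - alpha n x p k) * X ^ k * Y ^ p)).
Proof. symmetry. rewrite (rsum_trunc (S n) (S (S n))); [|lia|].
  2:{ intros i Hi. replace i with (S n) by lia. apply rsum_zero. intros p _. rewrite !alpha_hi by lia. ring. }
  rewrite (rsum_ext (S n) (fun k => rsum (S (S n)) (fun p => (alpha n x k p - alpha n x p k) * X ^ k * Y ^ p))
     (fun k => rsum (S n) (fun p => alpha n x k p * X ^ k * Y ^ p) - rsum (S n) (fun p => alpha n x p k * X ^ k * Y ^ p))).
  2:{ intros k Hk. rewrite (rsum_trunc (S n) (S (S n))). rewrite <- rsum_minus; apply rsum_ext; intros; ring. lia.
      intros i Hi. replace i with (S n) by lia. rewrite !alpha_hi by lia. ring. }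
  rewrite rsum_minus. rewrite (rsum_swap (S n) (S n) (fun k p => alpha n x p k * X ^ k * Y ^ p)).
  rewrite <- rsum_minus. apply rsum_ext; intros i _. rewrite <- rsum_minus. apply rsum_ext; intros; ring. Qed.

Lemma ee_zero n x k p : (k < S (S n))%nat -> (p < S (S n))%nat -> ee n x k p = 0.
Proof. apply bivar_zero. intros X Y.
  rewrite (rsum_ext _ _ (fun k => rsum (S (S n)) (fun p => sY n x k p * X ^ k * Y ^ p) -
       rsum (S (S n)) (fun p => sX n x k p * X ^ k * Y ^ p) - rsum (S (S n)) (fun p => (alpha n x k p - alpha n x p k) * X ^ k * Y ^ p))).
  2:{ intros; rewrite <- !rsum_minus; apply rsum_ext; intros; unfold ee; ring. }
  rewrite !rsum_minus. rewrite <- T1, <- T2, <- T3, <- gen_id. ring. Qed.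

Definition Tc (c : nat -> R) u j := INR (u+1) * c (u+1)%nat * c j - INR (j+1) * c (j+1)%nat * c u.
Definition Bm (c : nat -> R) k p := rsum (S p) (fun u => if Nat.leb u k then Tc c u (k+p+1-u) else 0).

Lemma Bm_step c k p : Bm c (S k) p = Bm c k (S p) + Tc c (S k) (S p).
Proof. unfold Bm.
  rewrite (rsum_ext (S p) _ (fun u => (if Nat.leb u k then Tc c u (k + S p + 1 - u) else 0) + (if Nat.eqb u (S k) then Tc c u (S k + p + 1 - u) else 0))).
  2:{ intros u _. destruct (Nat.leb u (S k)) eqn:E1; destruct (Nat.leb u k) eqn:E2; destruct (Nat.eqb u (S k)) eqn:E3;
      rewrite ?Nat.leb_le, ?Nat.leb_gt, ?Nat.eqb_eq, ?Nat.eqb_neq in *; try lia; try ring.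
      replace (k + S p + 1 - u)%nat with (S k + p + 1 - u)%nat by lia. ring. }
  rewrite rsum_plus, rsum_delta. change (rsum (S (S p)) ?F) with (rsum (S p) F + F (S p)).
  destruct (Nat.ltb (S k) (S p)) eqn:E1; destruct (Nat.leb (S p) k) eqn:E2;
    rewrite ?Nat.ltb_lt, ?Nat.ltb_ge, ?Nat.leb_le, ?Nat.leb_gt in *; try lia.
  - replace (S k + p + 1 - S k)%nat with (S p) by lia. ring.
  - replace (k + S p + 1 - S p)%nat with (S k) by lia. unfold Tc. ring.
  - replace k with p by lia. unfold Tc. ring. Qed.

Lemma Bm_hi n x k p : (n <= p)%nat -> Bm (coef n x) k p = 0.
Proof. intros H. unfold Bm. apply rsum_zero. intros u Hu. destruct (Nat.leb u k) eqn:E; auto.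
  apply Nat.leb_le in E. unfold Tc. rewrite !(coef_high n x (k + p + 1 - u)) by lia.
  rewrite (coef_high n x (k + p + 1 - u + 1)) by lia. ring. Qed.

Lemma Gm_Bm n x : forall k, (k < S (S n))%nat -> forall p, Gm n x k p = Bm (coef n x) k p.
Proof. induction k; intros Hk p.
  - destruct (Compare_dec.le_lt_dec n p) as [Hp|Hp]. rewrite Gm_hi_r, Bm_hi by auto. auto.
    assert (He := ee_zero n x 0 (S p) ltac:(lia) ltac:(lia)). unfold ee, sY, sX in He.
    unfold Bm. rewrite (rsum_ext (S p) _ (fun u => if Nat.eqb u 0 then Tc (coef n x) u (0 + p + 1 - u) else 0)).
    2:{ intros u _. destruct u; simpl; auto. }
    rewrite rsum_delta. simpl. replace (p + 1 - 0)%nat with (S p) by lia. unfold Tc, alpha in *. lra.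
  - destruct (Compare_dec.le_lt_dec n p) as [Hp|Hp]. rewrite Gm_hi_r, Bm_hi by auto. auto.
    assert (He := ee_zero n x (S k) (S p) ltac:(lia) ltac:(lia)). unfold ee, sY, sX in He.
    rewrite Bm_step, <- IHk by lia. unfold Tc, alpha in *. lra. Qed.

Lemma aext_avec n x : aext n (avec n x) = coef n x.
Proof. apply functional_extensionality; intros i. unfold aext, avec.
  destruct (Nat.ltb i n) eqn:E. auto. apply Nat.ltb_ge in E. destruct (Nat.eqb i n) eqn:E2.
  apply Nat.eqb_eq in E2; subst. rewrite coef_n; auto. apply Nat.eqb_neq in E2. rewrite coef_high by lia. auto. Qed.

Lemma Gamma_Bm n x k p : (k < n)%nat -> GammaE n (fun z => coef n z k) (fun z => coef n z p) x = Bm (aext n (avec n x)) k p.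
Proof. intros. rewrite aext_avec. apply (Gm_Bm n x k). lia. Qed.


Lemma is_poly_ext n f g : is_poly n f -> (forall a, f a = g a) -> is_poly n g.
Proof. intros H E. replace g with f; auto. apply functional_extensionality; auto. Qed.
Lemma is_poly_sub n f g : is_poly n f -> is_poly n g -> is_poly n (fun a => f a - g a).
Proof. intros. apply (is_poly_ext n (fun a => f a + (fun _ => -1) a * g a)).
  apply poly_add; auto. apply poly_mul; auto. apply poly_const. intros; simpl; ring. Qed.
Lemma is_poly_rsum n N F : (forall u, is_poly n (F u)) -> is_poly n (fun a => rsum N (fun u => F u a)).
Proof. intros H. induction N; simpl. apply poly_const. apply (poly_add n (fun a => rsum N (fun u => F u a)) (F N)); auto. Qed.
Lemma is_poly_aext n i : is_poly n (fun a => aext n a i).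
Proof. unfold aext. destruct (Nat.ltb i n) eqn:E. apply poly_var. apply Nat.ltb_lt; auto.
  destruct (Nat.eqb i n); apply poly_const. Qed.
Lemma is_poly_Bm n k p : is_poly n (fun a => Bm (aext n a) k p).
Proof. unfold Bm. apply is_poly_rsum. intros u. destruct (Nat.leb u k). 2: apply poly_const.
  unfold Tc. apply is_poly_sub; repeat apply poly_mul; try apply poly_const; apply is_poly_aext. Qed.

Definition Gdef n k p (a : nat -> R) := Bm (aext n a) k p.

Lemma part2 n : exists G : nat -> nat -> (nat -> R) -> R,
     (forall k p, (k < n)%nat -> (p < n)%nat ->
        is_poly n (G k p) /\
        forall x, GammaE n (fun z => coef n z k) (fun z => coef n z p) x
                  = G k p (avec n x)).
Proof. exists (Gdef n). intros k p Hk Hp. split. apply is_poly_Bm. intros x. unfold Gdef. apply Gamma_Bm; auto. Qed.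


Lemma is_poly_local n f a b : is_poly n f -> (forall i, (i < n)%nat -> a i = b i) -> f a = f b.
Proof. intros H E. induction H; auto. f_equal; auto. rewrite IHis_poly1, IHis_poly2; auto. Qed.

Lemma is_poly_subst m n f h : is_poly m f -> (forall i, (i < m)%nat -> is_poly n (h i)) ->
  is_poly n (fun a => f (fun i => h i a)).
Proof. intros H Hh. induction H. apply poly_const. apply Hh; auto.
  apply (poly_add n (fun a => f (fun i => h i a)) (fun a => g (fun i => h i a))); auto.
  apply (poly_mul n (fun a => f (fun i => h i a)) (fun a => g (fun i => h i a))); auto. Qed.

Definition upoly (g : R -> R) := exists M c, forall s, g s = rsum M (fun i => c i * s ^ i).

Lemma upoly_ext g h : upoly g -> (forall s, g s = h s) -> upoly h.
Proof. intros [M [c H]] E. exists M, c. intros; rewrite <- E; auto. Qed.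
Lemma upoly_const v : upoly (fun _ => v).
Proof. exists 1%nat, (fun _ => v). intros; simpl; ring. Qed.
Lemma upoly_id : upoly (fun s => s).
Proof. exists 2%nat, (fun i => match i with 1%nat => 1 | _ => 0 end). intros; simpl; ring. Qed.
Lemma rsum_pad M K c s : rsum M (fun i => c i * s ^ i) = rsum (M + K) (fun i => (if Nat.ltb i M then c i else 0) * s ^ i).
Proof. rewrite (rsum_trunc M (M+K)); [|lia|]. apply rsum_ext; intros i Hi.
  replace (Nat.ltb i M) with true by (symmetry; apply Nat.ltb_lt; auto). auto.
  intros i Hi. replace (Nat.ltb i M) with false by (symmetry; apply Nat.ltb_ge; lia). ring. Qed.
Lemma upoly_add g h : upoly g -> upoly h -> upoly (fun s => g s + h s).
Proof. intros [M [c Hg]] [K [d Hh]]. exists (M + K)%nat, (fun i => (if Nat.ltb i M then c i else 0) + (if Nat.ltb i K then d i else 0)).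
  intros s. rewrite Hg, Hh. rewrite (rsum_pad M K), (rsum_pad K M). replace (K + M)%nat with (M + K)%nat by lia. rewrite <- rsum_plus.
  apply rsum_ext; intros; ring. Qed.
Lemma upoly_scal v g : upoly g -> upoly (fun s => v * g s).
Proof. intros [M [c Hg]]. exists M, (fun i => v * c i). intros s. rewrite Hg, <- rsum_scal. apply rsum_ext; intros; ring. Qed.
Lemma upoly_shift g : upoly g -> upoly (fun s => s * g s).
Proof. intros [M [c Hg]]. exists (S M), (fun i => match i with O => 0 | S i' => c i' end). intros s. rewrite Hg, rsum_shift. auto. Qed.
Lemma upoly_pow j g : upoly g -> upoly (fun s => s ^ j * g s).
Proof. intros H. induction j. simpl. apply (upoly_ext g); auto. intros; ring.
  apply (upoly_ext (fun s => s * (s ^ j * g s))). apply upoly_shift; auto. intros; simpl; ring. Qed.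
Lemma upoly_rsum K F : (forall j, upoly (F j)) -> upoly (fun s => rsum K (fun j => F j s)).
Proof. intros H. induction K; simpl. apply upoly_const. apply (upoly_add (fun s => rsum K (fun j => F j s)) (F K)); auto. Qed.
Lemma upoly_mul g h : upoly g -> upoly h -> upoly (fun s => g s * h s).
Proof. intros Hg [K [d Hh]]. apply (upoly_ext (fun s => rsum K (fun j => d j * (s ^ j * g s)))).
  apply upoly_rsum; intros j. apply upoly_scal, upoly_pow; auto.
  intros s. rewrite Hh, Rmult_comm, <- rsum_scal_r. apply rsum_ext; intros; ring. Qed.

Lemma is_poly_upoly n f b j : is_poly n f -> upoly (fun s => f (upd b j s)).
Proof. intros H. induction H. apply upoly_const.
  - unfold upd. destruct (Nat.eqb i j). apply upoly_id. apply upoly_const.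
  - apply (upoly_add (fun s => f (upd b j s)) (fun s => g (upd b j s))); auto.
  - apply (upoly_mul (fun s => f (upd b j s)) (fun s => g (upd b j s))); auto. Qed.

Lemma upoly_zero g S0 : upoly g -> (forall s, s < S0 -> g s = 0) -> forall s, g s = 0.
Proof. intros [M [c Hg]] H s. rewrite Hg. apply rsum_zero. intros i Hi.
  rewrite (poly_zero_interval M c (S0 - 1) S0); [ring|lra| |auto]. intros y Hy. rewrite <- Hg. apply H. lra. Qed.


Definition Mt n t a k := (match k with O => 0 | S k' => aext n a k' end) - t * aext n a k.

Lemma is_poly_Mt n t k : is_poly n (fun a => Mt n t a k).
Proof. unfold Mt. apply is_poly_sub. destruct k. apply poly_const. apply is_poly_aext.
  apply poly_mul. apply poly_const. apply is_poly_aext. Qed.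

Lemma avec_S n x t i : (i < S n)%nat -> avec (S n) (upd x n t) i = Mt n t (avec n x) i.
Proof. intros Hi. unfold Mt. rewrite !aext_avec. unfold avec. replace (Nat.ltb i (S n)) with true by (symmetry; apply Nat.ltb_lt; auto).
  simpl. rewrite upd_same.
  assert (Hc : forall j, coef n (upd x n t) j = coef n x j) by (intros; apply coef_ext; intros; apply upd_other; lia).
  destruct i; rewrite ?Hc; auto. Qed.

Lemma rsum_abs_ge0 m c : 0 <= rsum m (fun k => Rabs (c k)).
Proof. induction m; simpl. lra. pose proof (Rabs_pos (c m)). lra. Qed.
Lemma poly_lb N t c : 1 <= t -> forall m, (m <= S N)%nat ->
  - (rsum m (fun k => Rabs (c k))) * t ^ N <= rsum m (fun k => c k * t ^ k).
Proof. intros Ht m. induction m; intros Hm; simpl. lra.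
  specialize (IHm ltac:(lia)).
  assert (H1 : t ^ m <= t ^ N) by (apply Rle_pow; lia || lra).
  assert (H2 : 0 <= t ^ m) by (apply pow_le; lra).
  assert (H3 : - Rabs (c m) * t ^ N <= c m * t ^ m).
  { pose proof (Rabs_pos (c m)). destruct (Rle_dec 0 (c m)).
    - rewrite Rabs_right by lra. nra.
    - rewrite Rabs_left by lra. nra. }
  lra. Qed.

Lemma cont_poly m c v : continuity (fun t => rsum (S m) (fun k => c k * t ^ k) - v).
Proof. intros t. apply derivable_continuous_pt. eexists. apply dl_minus. apply dl_poly. apply dl_const. Qed.

Lemma poly_surj n c : c (S n) = 1 -> forall v, rsum (S (S n)) (fun k => c k * 0 ^ k) <= v ->
  exists t, rsum (S (S n)) (fun k => c k * t ^ k) = v.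
Proof. intros Hc v Hv. destruct (Req_dec (rsum (S (S n)) (fun k => c k * 0 ^ k)) v) as [E|Hne]. exists 0; auto.
  set (C := rsum (S n) (fun k => Rabs (c k))). assert (HC : 0 <= C) by apply rsum_abs_ge0.
  set (T := C + Rabs v + 1).
  assert (HT : 1 <= T) by (unfold T; pose proof (Rabs_pos v); lra).
  assert (Hlb := poly_lb n T c HT (S n) ltac:(lia)). fold C in Hlb.
  assert (HTn : 1 <= T ^ n) by (apply pow_R1_Rle; lra).
  assert (HPT : v < rsum (S (S n)) (fun k => c k * T ^ k)).
  { change (rsum (S (S n)) (fun k => c k * T ^ k)) with (rsum (S n) (fun k => c k * T ^ k) + c (S n) * T ^ (S n)).
    rewrite Hc. simpl pow. assert (v < T - C) by (unfold T; pose proof (Rle_abs v); lra).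
    assert (0 <= (T ^ n - 1) * (T - C)) by (apply Rmult_le_pos; [lra| unfold T; pose proof (Rabs_pos v); lra]). nra. }
  destruct (IVT (fun t => rsum (S (S n)) (fun k => c k * t ^ k) - v) 0 T (cont_poly (S n) c v)) as [z [_ Hz]]; try lra.
  exists z. lra. Qed.

Lemma upd_id x l : upd x l (x l) = x.
Proof. apply functional_extensionality; intros i. unfold upd. destruct (Nat.eqb i l) eqn:E; auto.
  apply Nat.eqb_eq in E; subst; auto. Qed.

Lemma synth n b t : let bt := aext (S n) b in
  let q := fun k => rsum (S n - k) (fun m => bt (k + 1 + m)%nat * t ^ m) in
  forall i, (i < S n)%nat -> Mt n t q i = upd b 0 (b 0%nat - rsum (S (S n)) (fun k => bt k * t ^ k)) i.
Proof. intros bt q.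
  assert (Hq : forall k, (k <= n)%nat -> aext n q k = q k).
  { intros k Hk. unfold aext. destruct (Nat.ltb k n) eqn:E; auto. apply Nat.ltb_ge in E.
    replace k with n by lia. rewrite Nat.eqb_refl. unfold q. replace (S n - n)%nat with 1%nat by lia. simpl.
    unfold bt, aext. replace (Nat.ltb (n + 1 + 0) (S n)) with false by (symmetry; apply Nat.ltb_ge; lia).
    replace (Nat.eqb (n + 1 + 0) (S n)) with true by (symmetry; apply Nat.eqb_eq; lia). ring. }
  assert (Hrec : forall k, (k < n)%nat -> q k = bt (S k) + t * q (S k)).
  { intros k Hk. unfold q. replace (S n - k)%nat with (S (S n - S k)) by lia. rewrite rsum_first.
    rewrite <- rsum_scal. f_equal. replace (k + 1 + 0)%nat with (S k) by lia. simpl; ring. apply rsum_ext; intros m _. replace (k + 1 + S m)%nat with (S k + 1 + m)%nat by lia. change (t ^ S m) with (t * t ^ m). ring. }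
  intros i Hi. unfold Mt. destruct i.
  - rewrite upd_same. rewrite Hq by lia. rewrite rsum_first. unfold q. replace (S n - 0)%nat with (S n) by lia.
    simpl pow. rewrite <- rsum_scal. assert (Hb0 : bt 0%nat = b 0%nat) by (unfold bt, aext; simpl; auto). rewrite Hb0.
    rewrite (rsum_ext (S n) (fun i => bt (S i) * (t * t ^ i)) (fun m => t * (bt (0 + 1 + m)%nat * t ^ m))). ring.
    intros; simpl; ring.
  - rewrite upd_other by lia. rewrite !Hq by lia. rewrite Hrec by lia. unfold bt, aext.
    replace (Nat.ltb (S i) (S n)) with true by (symmetry; apply Nat.ltb_lt; lia). ring. Qed.

Lemma poly_vanish : forall n f, is_poly n f -> (forall x, f (avec n x) = 0) -> forall a, f a = 0.
Proof. induction n; intros f Hf Hv a.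
  - rewrite (is_poly_local 0 f a (avec 0 (fun _ => 0))) by (auto; intros; lia). auto.
  - assert (Hg : forall t a, f (Mt n t a) = 0).
    { intros t. apply IHn. apply (is_poly_subst (S n) n f (fun i a => Mt n t a i)); auto. intros; apply is_poly_Mt.
      intros x. rewrite <- (Hv (upd x n t)). apply is_poly_local with (n := S n); auto. intros; symmetry; apply avec_S; auto. }
    set (bt := aext (S n) a).
    assert (Hs : forall s, s < a 0%nat - rsum (S (S n)) (fun k => bt k * 0 ^ k) -> f (upd a 0 s) = 0).
    { intros s Hs. destruct (poly_surj n bt) with (v := a 0%nat - s) as [t Ht].
      unfold bt, aext. replace (Nat.ltb (S n) (S n)) with false by (symmetry; apply Nat.ltb_ge; lia). rewrite Nat.eqb_refl; auto.
      lra. replace s with (a 0%nat - rsum (S (S n)) (fun k => bt k * t ^ k)) by lra.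
      rewrite <- (Hg t (fun k => rsum (S n - k) (fun m => bt (k + 1 + m)%nat * t ^ m))).
      apply is_poly_local with (n := S n); auto. intros i Hi. symmetry. apply synth; auto. }
    rewrite <- (upd_id a 0). apply (upoly_zero (fun s => f (upd a 0 s)) _ (is_poly_upoly _ f a 0 Hf) Hs). Qed.


Lemma aext_upd n a k t : (k < n)%nat -> aext n (upd a k t) = upd (aext n a) k t.
Proof. intros Hk. apply functional_extensionality; intros i. unfold aext, upd.
  destruct (Nat.ltb i n) eqn:E; auto. apply Nat.ltb_ge in E.
  replace (Nat.eqb i k) with false by (symmetry; apply Nat.eqb_neq; lia). auto. Qed.

Definition fk p k := if Nat.ltb (k-1) (S p) then (if Nat.leb 1 k then INR k else 0) else 0.
Definition gk p k := if Nat.ltb k (S p) then INR (p+2) else 0.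

Lemma Bm_affine c k p t : Bm (upd c k t) k p =
  Bm (upd c k 0) k p + t * (fk p k * c (p+2)%nat - gk p k * c (p+2)%nat).
Proof. unfold Bm.
  rewrite (rsum_ext (S p) (fun u => if Nat.leb u k then Tc (upd c k t) u (k + p + 1 - u) else 0)
     (fun u => (if Nat.leb u k then Tc (upd c k 0) u (k + p + 1 - u) else 0) +
        t * ((if Nat.eqb u (k-1) then (if Nat.leb 1 k then INR k * c (p+2)%nat else 0) else 0)
           - (if Nat.eqb u k then INR (p+2) * c (p+2)%nat else 0)))).
  2:{ intros u Hu. destruct (Nat.leb u k) eqn:E. 
      - apply Nat.leb_le in E. unfold Tc.
        rewrite !(upd_other c k _ (k + p + 1 - u)) by lia. rewrite !(upd_other c k _ (k + p + 1 - u + 1)) by lia.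
        destruct (Nat.eq_dec u k) as [->|Hne1].
        + rewrite Nat.eqb_refl. rewrite !upd_same, !upd_other by lia.
          replace (k + p + 1 - k + 1)%nat with (p+2)%nat by lia.
          replace (k + p + 1 - k)%nat with (p+1)%nat by lia. replace (p + 1 + 1)%nat with (p+2)%nat by lia.
          destruct (Nat.eqb k (k-1)) eqn:E1; [|ring].
          apply Nat.eqb_eq in E1. replace (Nat.leb 1 k) with false by (symmetry; apply Nat.leb_gt; lia). ring.
        + replace (Nat.eqb u k) with false by (symmetry; apply Nat.eqb_neq; lia).
          destruct (Nat.eq_dec (u+1) k) as [E1|E1].
          * replace (Nat.eqb u (k-1)) with true by (symmetry; apply Nat.eqb_eq; lia).
            replace (Nat.leb 1 k) with true by (symmetry; apply Nat.leb_le; lia).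
            rewrite E1, !upd_same, !upd_other by lia.
            replace (k + p + 1 - u)%nat with (p+2)%nat by lia. ring.
          * replace (Nat.eqb u (k-1)) with false by (symmetry; apply Nat.eqb_neq; lia).
            rewrite !upd_other by lia. ring.
      - apply Nat.leb_gt in E. replace (Nat.eqb u (k-1)) with false by (symmetry; apply Nat.eqb_neq; lia).
        replace (Nat.eqb u k) with false by (symmetry; apply Nat.eqb_neq; lia). ring. }
  rewrite rsum_plus, rsum_scal, rsum_minus, !rsum_delta. f_equal. f_equal. unfold fk, gk.
  destruct (Nat.ltb (k-1) (S p)); destruct (Nat.ltb k (S p)); destruct (Nat.leb 1 k); ring. Qed.

Lemma partial_Gdef n k p a : (k < n)%nat -> partial (Gdef n k p) k a =
  fk p k * aext n a (p+2)%nat - gk p k * aext n a (p+2)%nat.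
Proof. intros Hk. apply (partial_affine _ _ _ (Bm (upd (aext n a) k 0) k p)). intros t.
  unfold Gdef. rewrite aext_upd by auto. apply Bm_affine. Qed.

Lemma sum_gk0 p N : (N <= S p)%nat -> rsum N (gk p) = INR N * INR (p+2).
Proof. induction N; intros H. simpl. ring. simpl rsum. rewrite IHN by lia. unfold gk.
  replace (Nat.ltb N (S p)) with true by (symmetry; apply Nat.ltb_lt; lia). rewrite S_INR. ring. Qed.
Lemma sum_gk p N : (S p <= N)%nat -> rsum N (gk p) = INR (p+1) * INR (p+2).
Proof. intros H. rewrite (rsum_trunc (S p) N) by (auto; intros i Hi; unfold gk; replace (Nat.ltb i (S p)) with false by (symmetry; apply Nat.ltb_ge; lia); auto).
  rewrite sum_gk0 by lia. replace (p+1)%nat with (S p) by lia. auto. Qed.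

Lemma sum_fk0 p N : rsum N (fk p) = if Nat.leb N (p+2) then INR N * (INR N - 1) / 2 else INR (p+1) * INR (p+2) / 2.
Proof. induction N. simpl. field. simpl rsum. rewrite IHN. unfold fk.
  destruct (Nat.leb (S N) (p+2)) eqn:E1; destruct (Nat.leb N (p+2)) eqn:E2;
    rewrite ?Nat.leb_le, ?Nat.leb_gt in *; try lia.
  - replace (Nat.ltb (N-1) (S p)) with true by (symmetry; apply Nat.ltb_lt; lia).
    destruct N. simpl. field. replace (Nat.leb 1 (S N)) with true by (symmetry; apply Nat.leb_le; lia).
    rewrite !S_INR. field.
  - replace (Nat.ltb (N-1) (S p)) with false by (symmetry; apply Nat.ltb_ge; lia).
    replace N with (p+2)%nat by lia. rewrite !plus_INR. simpl. field.
  - replace (Nat.ltb (N-1) (S p)) with false by (symmetry; apply Nat.ltb_ge; lia). ring. Qed.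


Lemma part3 n : forall G : nat -> nat -> (nat -> R) -> R,
     (forall k p, (k < n)%nat -> (p < n)%nat ->
        is_poly n (G k p) /\
        forall x, GammaE n (fun z => coef n z k) (fun z => coef n z p) x
                  = G k p (avec n x)) ->
     forall (p : nat), (p < n)%nat -> forall a : nat -> R,
       rsum n (fun k => partial (G k p) k a)
       = - (1/2) * INR (p + 1) * INR (p + 2) * aext n a (p + 2).
Proof. intros G HG p Hp a.
  assert (HGe : forall k, (k < n)%nat -> G k p = Gdef n k p).
  { intros k Hk. destruct (HG k p Hk Hp) as [Hpol Hx]. apply functional_extensionality; intros b.
    assert (Z := poly_vanish n (fun b => G k p b - Gdef n k p b) (is_poly_sub _ _ _ Hpol (is_poly_Bm n k p))).
    assert (Z' : G k p b - Gdef n k p b = 0). apply Z. intros x. rewrite <- Hx. unfold Gdef. rewrite <- Gamma_Bm by auto. ring.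
    lra. }
  rewrite (rsum_ext n _ (fun k => fk p k * aext n a (p+2)%nat - gk p k * aext n a (p+2)%nat)).
  2:{ intros k Hk. rewrite HGe by auto. apply partial_Gdef; auto. }
  rewrite rsum_minus, !rsum_scal_r, sum_gk by lia. rewrite sum_fk0.
  destruct (Compare_dec.le_lt_dec (p+2) n) as [H2|H2].
  - destruct (Nat.leb n (p+2)) eqn:E.
    + apply Nat.leb_le in E. replace n with (p+2)%nat by lia. rewrite !plus_INR. simpl. field.
    + rewrite !plus_INR. simpl. field.
  - unfold aext. replace (Nat.ltb (p+2) n) with false by (symmetry; apply Nat.ltb_ge; lia).
    replace (Nat.eqb (p+2) n) with false by (symmetry; apply Nat.eqb_neq; lia). ring. Qed.

Theorem mainTheorem3 (n : nat) :
  (* Part 1: the polynomial identities in X, Y *)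
  (forall (x : nat -> R) (X Y : R),
     GammaE n (fun z => Ppoly n z X) (fun z => Ppoly n z Y) x
     = rsum (S n) (fun i => rsum (S n) (fun j =>
         GammaE n (fun z => coef n z i) (fun z => coef n z j) x * X ^ i * Y ^ j))
   /\ (X <> Y ->
       GammaE n (fun z => Ppoly n z X) (fun z => Ppoly n z Y) x
       = (deriv1 (Ppoly n x) X * Ppoly n x Y - deriv1 (Ppoly n x) Y * Ppoly n x X)
         / (Y - X))
   /\ (X <> Y ->
       GammaE n (fun z => Ppoly n z X) (fun z => Ppoly n z Y) x
       = rsum (S n) (fun i => rsum (S n) (fun j =>
           if Nat.eqb i j then 0
           else alpha n x i j * (X ^ i * Y ^ j - X ^ j * Y ^ i) / (Y - X)))))
  /\
  (* Part 2: the G^{kp} are polynomials in (a_0,...,a_{n-1}) ... *)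
  (exists G : nat -> nat -> (nat -> R) -> R,
     (forall k p, (k < n)%nat -> (p < n)%nat ->
        is_poly n (G k p) /\
        forall x, GammaE n (fun z => coef n z k) (fun z => coef n z p) x
                  = G k p (avec n x)))
  /\
  (* ... and, regarded as such polynomials, satisfy the divergence identity *)
  (forall G : nat -> nat -> (nat -> R) -> R,
     (forall k p, (k < n)%nat -> (p < n)%nat ->
        is_poly n (G k p) /\
        forall x, GammaE n (fun z => coef n z k) (fun z => coef n z p) x
                  = G k p (avec n x)) ->
     forall (p : nat), (p < n)%nat -> forall a : nat -> R,
       rsum n (fun k => partial (G k p) k a)
       = - (1/2) * INR (p + 1) * INR (p + 2) * aext n a (p + 2)).
Proof.
  split; [apply part1|]. split; [apply part2|apply part3].
Qed.
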